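(* Let $G_1,\ldots,G_k$ be groups, $G=G_1\times\cdots\times G_k$, and for $i=1,\ldots,k$ let $H_i\le G_i$. Let $H\le G$ be a subgroup such that $H_1\times\cdots\times H_k\trianglelefteq H$, the quotient $N_G(H_1\times\cdots\times H_k)/(H_1\times\cdots\times H_k)$ is abelian, and $N_{G_i}(\sigma_i(H))=N_{G_i}(H_i)$ for all $i$. Then $$N_G(H)=N_G(H_1\times\cdots\times H_k)=N_{G_1}(H_1)\times\cdots\times N_{G_k}(H_k).$$
   Context: $\sigma_i:G\to G_i$ denotes the natural projection onto the $i$-th direct factor. *)

(* Defs.v *)
(* Arbitrary (possibly
   infinite) groups are given as a record carrying the group axioms. *)
From Stdlib Require Import FunctionalExtensionality.
From mathcomp Require Import all_boot.

Set Implicit Arguments.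
Unset Strict Implicit.
Unset Printing Implicit Defensive.

Record group := Group {
  gcar :> Type;
  gmul : gcar -> gcar -> gcar;
  gone : gcar;
  ginv : gcar -> gcar;
  gmulA : forall x y z, gmul x (gmul y z) = gmul (gmul x y) z;
  gmul1 : forall x, gmul gone x = x;
  gmulV : forall x, gmul (ginv x) x = gone
}.

Arguments gmul {g}.
Arguments gone {g}.
Arguments ginv {g}.

Definition gset (G : group) := G -> Prop.

Definition set_eq (G : group) (A B : gset G) := forall x, A x <-> B x.
Definition subset (G : group) (A B : gset G) := forall x, A x -> B x.

Definition is_subgroup (G : group) (H : gset G) : Prop :=
  H gone /\ (forall x y, H x -> H y -> H (gmul x y)) /\
  (forall x, H x -> H (ginv x)).

Definition normalizer (G : group) (A : gset G) : gset G :=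
  fun g => forall x, A (gmul (gmul (ginv g) x) g) <-> A x.

Definition normal_sub (G : group) (K H : gset G) : Prop :=
  is_subgroup K /\ is_subgroup H /\ subset K H /\
  forall h x, H h -> K x -> K (gmul (gmul (ginv h) x) h).

Definition lcoset (G : group) (K : gset G) (g : G) : gset G :=
  fun z => exists k, K k /\ z = gmul g k.

(* the quotient N/K (K normal in N) is abelian: (xK)(yK) = (yK)(xK),
   i.e. (xy)K = (yx)K for all x, y in N *)
Definition quotient_abelian (G : group) (N K : gset G) : Prop :=
  forall x y, N x -> N y -> set_eq (lcoset K (gmul x y)) (lcoset K (gmul y x)).

Section Prod.
Variables (k : nat) (Gs : 'I_k -> group).

Definition prod_car := forall i, Gs i.
Definition prod_mul (x y : prod_car) : prod_car := fun i => gmul (x i) (y i).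
Definition prod_one : prod_car := fun i => gone.
Definition prod_inv (x : prod_car) : prod_car := fun i => ginv (x i).

Lemma prod_mulA x y z : prod_mul x (prod_mul y z) = prod_mul (prod_mul x y) z.
Proof. apply: functional_extensionality_dep => i; exact: gmulA. Qed.
Lemma prod_mul1 x : prod_mul prod_one x = x.
Proof. apply: functional_extensionality_dep => i; exact: gmul1. Qed.
Lemma prod_mulV x : prod_mul (prod_inv x) x = prod_one.
Proof. apply: functional_extensionality_dep => i; exact: gmulV. Qed.

Definition prod_group : group := Group prod_mulA prod_mul1 prod_mulV.

Definition proj (i : 'I_k) (g : prod_group) : Gs i := g i.

Definition proj_set (i : 'I_k) (H : gset prod_group) : gset (Gs i) :=
  fun y => exists h, H h /\ proj i h = y.

Definition prod_set (Hs : forall i, gset (Gs i)) : gset prod_group :=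
  fun g => forall i, Hs i (g i).
End Prod.
Arguments proj {k Gs} i g.
Arguments proj_set {k Gs} i H _.
Arguments prod_set {k Gs} Hs _.

(* Main.v *)
Require Import Defs.
From mathcomp Require Import all_boot.

Section GL.
Context {G : group}.
Implicit Types x y z : G.

Lemma mulgV' x : gmul x (ginv x) = gone.
Proof.
rewrite -[gmul x (ginv x)]gmul1 -(gmulV (gmul x (ginv x))).
rewrite -!gmulA; congr gmul.
by rewrite [gmul (ginv x) (gmul x (ginv x))]gmulA gmulV gmul1.
Qed.

Lemma mulg1' x : gmul x gone = x.
Proof. by rewrite -(gmulV x) gmulA mulgV' gmul1. Qed.

Lemma mulKg x y : gmul (ginv x) (gmul x y) = y.
Proof. by rewrite gmulA gmulV gmul1. Qed.
Lemma mulVKg x y : gmul x (gmul (ginv x) y) = y.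
Proof. by rewrite gmulA mulgV' gmul1. Qed.

Lemma invgK x : ginv (ginv x) = x.
Proof. by rewrite -[LHS]mulg1' -(gmulV x) gmulA gmulV gmul1. Qed.

Lemma invgM x y : ginv (gmul x y) = gmul (ginv y) (ginv x).
Proof.
have e : gmul (gmul x y) (gmul (ginv y) (ginv x)) = gone.
  by rewrite -gmulA mulVKg mulgV'.
by rewrite -[LHS]mulg1' -e gmulA gmulV gmul1.
Qed.

Lemma inv1 : ginv (@gone G) = gone.
Proof. by rewrite -[LHS]gmul1 mulgV'. Qed.
End GL.

Ltac gs := repeat (rewrite ?invgM ?invgK ?inv1 -?gmulA ?mulKg ?mulVKg ?gmul1 ?mulg1' ?gmulV ?mulgV').

Lemma normV {G : group} {A : gset G} {g} : normalizer A g -> normalizer A (ginv g).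
Proof.
move=> N x; rewrite invgK; split => Hx.
  by have := (N (gmul (gmul g x) (ginv g))).2 Hx; gs.
by apply: (N _).1; gs.
Qed.

Lemma normM {G : group} {A : gset G} {a b} :
  normalizer A a -> normalizer A b -> normalizer A (gmul a b).
Proof.
move=> Na Nb x; have := Nb (gmul (gmul (ginv a) x) a); have := Na x.
gs => e1 e2; split => h; [apply/e1/e2 | apply/e2/e1]; by gs.
Qed.

Section Main.
Variables (k : nat) (Gs : 'I_k -> group).

Lemma pmulE (x y : prod_group Gs) i : (gmul x y) i = gmul (x i) (y i).
Proof. by []. Qed.
Lemma pinvE (x : prod_group Gs) i : (ginv x) i = ginv (x i).
Proof. by []. Qed.
Lemma poneE i : (@gone (prod_group Gs)) i = gone.
Proof. by []. Qed.

Definition upd (i : 'I_k) (y : Gs i) : prod_group Gs := fun j =>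
  match @eqP _ i j with ReflectT e => ecast j (Gs j) e y | ReflectF _ => gone end.

Arguments upd {i} y.

Lemma upd_i (i : 'I_k) (y : Gs i) : upd y i = y.
Proof. rewrite /upd; case: eqP => // e; by rewrite eq_axiomK. Qed.
Lemma upd_j (i : 'I_k) (y : Gs i) j : i != j -> upd y j = gone.
Proof. rewrite /upd; case: eqP => // e; by rewrite e eqxx. Qed.

Lemma part2 (Hs : forall i, gset (Gs i)) :
  (forall i, is_subgroup (Hs i)) ->
  set_eq (normalizer (prod_set Hs)) (prod_set (fun i => normalizer (Hs i))).
Proof.
move=> sH g; split.
  move=> N i y; have := N (upd y); rewrite /prod_set => -[h1 h2]; split.
    move=> Hy; suff: Hs i (upd y i) by rewrite upd_i.
    apply: h1 => j.
    case: (eqVneq i j) => [e|ne]; first subst j; first by rewrite pmulE pmulE upd_i.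
    rewrite pmulE pmulE upd_j //; gs; by case: (sH j).
  move=> Hy; suff: Hs i ((gmul (gmul (ginv g) (upd y)) g) i) by rewrite !pmulE upd_i.
  apply: h2 => j.
  case: (eqVneq i j) => [e|ne]; first subst j; first by rewrite upd_i.
  rewrite upd_j //; by case: (sH j).
move=> Ng x; rewrite /prod_set; split => Hx i.
  exact: (Ng i (x i)).1 (Hx i).
exact: (Ng i (x i)).2 (Hx i).
Qed.

End Main.

Theorem lemma5p1 (k : nat) (Gs : 'I_k -> group)
  (Hs : forall i, gset (Gs i)) (H : gset (prod_group Gs)) :
  (forall i, is_subgroup (Hs i)) ->
  is_subgroup H ->
  normal_sub (prod_set Hs) H ->
  quotient_abelian (normalizer (prod_set Hs)) (prod_set Hs) ->
  (forall i, set_eq (normalizer (proj_set i H)) (normalizer (Hs i))) ->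
  set_eq (normalizer H) (normalizer (prod_set Hs)) /\
  set_eq (normalizer (prod_set Hs))
         (prod_set (fun i => normalizer (Hs i))).
Proof.
move=> sHi sH [sK [_ [KH nKH]]] qa hN.
set K := prod_set Hs.
have P2 := @part2 k Gs Hs sHi.
have HNK : forall h, H h -> normalizer K h.
  move=> h Hh x; split => Kx; last exact: nKH.
  have := nKH (ginv h) _ (proj2 (proj2 sH) _ Hh) Kx; by gs.
have aux : forall g h, normalizer K g -> H h -> H (gmul (gmul (ginv g) h) g).
  move=> g h Ng Hh.
  have := qa (ginv g) (gmul h g) (normV Ng) (normM (HNK _ Hh) Ng).
  move=> /(_ (gmul (gmul h g) (ginv g))) [_ /(_ _)] [].
    by exists gone; split; [case: sK | rewrite mulg1'].
  move=> c [Kc e].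
  have -> : gmul (gmul (ginv g) h) g = gmul h (ginv c).
    by rewrite -[LHS]mulg1' -(mulgV' c) gmulA -(gmulA (ginv g) h g) -e; gs.
  case: sH => _ [mH iH]; apply: mH => //; apply: iH; exact: KH.
split; last exact: P2.
move=> g; split => Ng.
  apply/P2 => i; apply/hN => y; split.
    move=> [h [Hh e]]; exists (gmul (gmul g h) (ginv g)); split.
      by apply/Ng; gs.
    by rewrite /proj !pmulE pinvE; move: e; rewrite /proj => ->; gs.
  move=> [h [Hh e]]; exists (gmul (gmul (ginv g) h) g); split.
    by apply/Ng.
  by move: e; rewrite /proj !pmulE pinvE => ->.
move=> x; split => Hx; last exact: aux.
have := aux _ _ (normV Ng) Hx; by gs.
Qed.
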